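(* Let $P,N_0,B>0$, $\mathrm{SNR}=\frac{P}{BN_0}<1$, $\alpha\in(0,1]$, $\epsilon\in(0,\alpha)$, $\delta=\mathrm{SNR}^{1-\alpha}$, and $L_c=B_cT_c$. If there exists $\sigma\in(0,\epsilon)$ such that \[ L_c=\frac{N_{\mathrm{t}}^2}{(N_\mathrm{r}+N_\mathrm{t})^2}\mathrm{SNR}^{-2(\sigma+\alpha)}, \] then \[ \delta B <\frac{P}{N_0}\frac{N_\mathrm{r}+N_\mathrm{t}}{N_\mathrm{t}}\sqrt{B_cT_c}\qquad\text{and}\qquad \delta B^{1+\epsilon} >\left(\frac{P}{N_0}\right)^{1+\epsilon}\frac{N_\mathrm{r}+N_\mathrm{t}}{N_\mathrm{t}}\sqrt{B_cT_c}. \]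
   Context: $P$ is the average transmit power, $N_0$ the noise power spectral density, $B$ the bandwidth, $N_{\mathrm{t}},N_{\mathrm{r}}$ the numbers of transmit and receive antennas, $T_c$ the coherence time and $B_c$ the coherence bandwidth of a block-fading channel, $L_c=B_cT_c$ the coherence length, and $\delta\in(0,1]$ the transmission duty cycle (peakiness parameter). *)

(* Defs.v *)
From Stdlib Require Import Reals.
Open Scope R_scope.

Definition SNR (P N0 B : R) : R := P / (B * N0).

Definition duty_cycle (P N0 B alpha : R) : R := Rpower (SNR P N0 B) (1 - alpha).

(* Main.v *)
Require Import Defs.
From Stdlib Require Import Reals Lra.
Open Scope R_scope.

Lemma rp_lt (s x y : R) : 0 < s < 1 -> y < x -> Rpower s x < Rpower s y.
Proof.
  intros [h0 h1] hxy. unfold Rpower. apply exp_increasing.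
  assert (ln s < 0).
  { rewrite <- ln_1. apply ln_increasing; lra. }
  nra.
Qed.

Theorem corollary3
  (P N0 B Bc Tc Lc alpha eps : R) (Nt Nr : nat)
  (hP : 0 < P) (hN0 : 0 < N0) (hB : 0 < B)
  (hBc : 0 < Bc) (hTc : 0 < Tc)
  (hNt : (1 <= Nt)%nat) (hNr : (1 <= Nr)%nat)
  (hSNR : SNR P N0 B < 1)
  (halpha : 0 < alpha <= 1)
  (heps : 0 < eps < alpha)
  (hLc : Lc = Bc * Tc)
  (hsigma : exists sigma, 0 < sigma < eps /\
      Lc = (INR Nt ^ 2 / (INR Nr + INR Nt) ^ 2)
             * Rpower (SNR P N0 B) (-2 * (sigma + alpha))) :
  duty_cycle P N0 B alpha * B
    < (P / N0) * ((INR Nr + INR Nt) / INR Nt) * sqrt (Bc * Tc)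
  /\
  duty_cycle P N0 B alpha * Rpower B (1 + eps)
    > Rpower (P / N0) (1 + eps) * ((INR Nr + INR Nt) / INR Nt) * sqrt (Bc * Tc).
Proof.
  destruct hsigma as [sg [hsg hL]].
  unfold duty_cycle.
  set (s := SNR P N0 B) in *.
  assert (hs0 : 0 < s) by (unfold s, SNR; apply Rdiv_lt_0_compat; nra).
  assert (hPN : P / N0 = s * B) by (unfold s, SNR; field; lra).
  assert (hnt : 1 <= INR Nt) by (apply (le_INR 1); exact hNt).
  assert (hnr : 1 <= INR Nr) by (apply (le_INR 1); exact hNr).
  set (a := INR Nt / (INR Nr + INR Nt)).
  set (K := (INR Nr + INR Nt) / INR Nt).
  assert (ha : 0 < a) by (unfold a; apply Rdiv_lt_0_compat; lra).
  assert (hKa : K * a = 1) by (unfold K, a; field; lra).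
  set (X := Rpower s (-(sg + alpha))).
  assert (hX : 0 < X) by (unfold X, Rpower; apply exp_pos).
  assert (hsq : sqrt (Bc * Tc) = a * X).
  { rewrite <- hLc, hL.
    replace (-2 * (sg + alpha)) with (-(sg+alpha) + -(sg+alpha)) by ring.
    rewrite Rpower_plus. fold X.
    replace (INR Nt ^ 2 / (INR Nr + INR Nt) ^ 2 * (X * X)) with (Rsqr (a * X))
      by (unfold Rsqr, a; field; lra).
    apply sqrt_Rsqr. nra. }
  rewrite hsq, hPN.
  split.
  - replace (s * B * K * (a * X)) with (B * (Rpower s 1 * X))
      by (assert (Rpower s 1 = s) by (apply Rpower_1; lra); rewrite H; replace (s*B*K*(a*X)) with (B*(s*X)*(K*a)) by ring; rewrite hKa; ring).
    unfold X; rewrite <- Rpower_plus.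
    rewrite (Rmult_comm _ B). apply Rmult_lt_compat_l; [lra|].
    apply rp_lt; lra.
  - rewrite <- Rpower_mult_distr by lra.
    replace (Rpower s (1 + eps) * Rpower B (1 + eps) * K * (a * X))
      with (Rpower B (1 + eps) * (Rpower s (1 + eps) * X))
      by (replace (Rpower s (1 + eps) * Rpower B (1 + eps) * K * (a * X)) with
            (Rpower B (1 + eps) * (Rpower s (1 + eps) * X) * (K*a)) by ring; rewrite hKa; ring).
    unfold X; rewrite <- Rpower_plus.
    rewrite (Rmult_comm _ (Rpower B _)). apply Rmult_lt_compat_l.
    + unfold Rpower; apply exp_pos.
    + apply rp_lt; lra.
Qed.
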